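(* Let $\mu^\ast$ be an upper quasi-density on $\mathbb{H}$, let $X\subseteq Y\subseteq\mathbb{H}$ with $\mu^\ast(X)<\mu^\ast(Y)$, and let $\xi$ be a real number with $\mu^\ast(X)<\xi<\mu^\ast(Y)$. Then there exist sequences $(A_n)_{n\ge1}$, $(B_n)_{n\ge1}$ of subsets of $\mathbb{H}$ such that: (i) $X\subseteq A_1\subseteq A_2\subseteq\cdots\subseteq A_n\subseteq\cdots\subseteq B_n\subseteq\cdots\subseteq B_2\subseteq B_1\subseteq Y$; (ii) $\mu^\ast(A_n)<\xi\le\mu^\ast(B_n)$ for all $n\in\mathbb{N}^+$; (iii) for each $n\in\mathbb{N}^+$ there exist $h,k\in\mathbb{N}$ with $k\ge n$ and $B_n\setminus A_n\subseteq k\cdot\mathbb{H}+h$.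
   Context: $\mathbb{N}=\{0,1,2,\dots\}$, $\mathbb{N}^+=\{1,2,\dots\}$; $\mathbb{H}$ is one of $\mathbb{Z},\mathbb{N},\mathbb{N}^+$. For $X\subseteq\mathbb{H}$, $k\in\mathbb{N}^+$, $h\in\mathbb{N}$, $k\cdot X+h:=\{kx+h:x\in X\}$. An upper quasi-density on $\mathbb{H}$ is a function $\mu^\ast:\mathcal{P}(\mathbb{H})\to\mathbb{R}$ with $\mu^\ast(\mathbb{H})=1$, $\mu^\ast(X)\le1$ for all $X$, $\mu^\ast(X\cup Y)\le\mu^\ast(X)+\mu^\ast(Y)$ for all $X,Y$, and $\mu^\ast(k\cdot X+h)=\frac1k\mu^\ast(X)$ for all $X\subseteq\mathbb{H}$, $h,k\in\mathbb{N}^+$. *)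

(* Defs.v *)
From Stdlib Require Import Reals ZArith.
Open Scope R_scope.

(* The three choices of the ambient set H, all viewed inside Z. *)
Inductive Hkind := HZ | HN | HNpos.

Definition inH (H : Hkind) (z : Z) : Prop :=
  match H with
  | HZ => True
  | HN => (0 <= z)%Z
  | HNpos => (0 < z)%Z
  end.

Definition subH (H : Hkind) (X : Z -> Prop) : Prop := forall z, X z -> inH H z.

Definition incl (X Y : Z -> Prop) : Prop := forall z, X z -> Y z.

Definition union (X Y : Z -> Prop) : Z -> Prop := fun z => X z \/ Y z.

Definition setminus (X Y : Z -> Prop) : Z -> Prop := fun z => X z /\ ~ Y z.

Definition dil (k h : Z) (X : Z -> Prop) : Z -> Prop :=
  fun z => exists x, X x /\ z = (k * x + h)%Z.

(* Upper quasi-density on H (values on subsets of H only matter). *)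
Definition upper_quasi_density (H : Hkind) (mu : (Z -> Prop) -> R) : Prop :=
  mu (inH H) = 1 /\
  (forall X, subH H X -> mu X <= 1) /\
  (forall X Y, subH H X -> subH H Y -> mu (union X Y) <= mu X + mu Y) /\
  (forall X h k, subH H X -> (0 < h)%Z -> (0 < k)%Z ->
     mu (dil k h X) = / IZR k * mu X).

(* Main.v *)
Require Import Defs.
From Stdlib Require Import Reals ZArith Lia Lra.
From Stdlib Require Import FunctionalExtensionality PropExtensionality ClassicalEpsilon Classical.
Open Scope R_scope.

Lemma pext (P Q : Z -> Prop) : (forall z, P z <-> Q z) -> P = Q.
Proof.
  intros E; apply functional_extensionality; intros z; apply propositional_extensionality; auto.
Qed.

Lemma dil_sing k h c : dil k h (fun w => w = c) = (fun w => w = (k * c + h)%Z).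
Proof.
  apply pext; intros z; split.
  - intros [x [-> ->]]; reflexivity.
  - intros ->; exists c; auto.
Qed.

Lemma inH1 H : inH H 1%Z.
Proof. destruct H; simpl; lia. Qed.

Lemma sing0 H mu : upper_quasi_density H mu ->
  forall z, inH H z -> mu (fun w => w = z) = 0.
Proof.
  intros [_ [_ [_ Hd]]].
  assert (S1 : subH H (fun w => w = 1%Z)) by (intros w ->; apply inH1).
  assert (H1 : mu (fun w => w = 1%Z) = 0).
  { pose proof (Hd _ 1%Z 2%Z S1 ltac:(lia) ltac:(lia)) as E1.
    pose proof (Hd _ 2%Z 1%Z S1 ltac:(lia) ltac:(lia)) as E2.
    rewrite dil_sing in E1, E2. simpl in E1, E2.
    rewrite E2 in E1. rewrite Rinv_1 in E1. lra. }
  intros z Hz.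
  destruct (Z_lt_le_dec 1 z) as [Hlt|Hle].
  - pose proof (Hd _ (z - 1)%Z 1%Z S1 ltac:(lia) ltac:(lia)) as E.
    rewrite dil_sing in E. replace (1 * 1 + (z - 1))%Z with z in E by lia.
    rewrite E, H1; lra.
  - destruct (Z.eq_dec z 1) as [->|Hne]; [exact H1|].
    assert (Sz : subH H (fun w => w = z)) by (intros w ->; exact Hz).
    pose proof (Hd _ (1 - z)%Z 1%Z Sz ltac:(lia) ltac:(lia)) as E.
    rewrite dil_sing in E. replace (1 * z + (1 - z))%Z with 1%Z in E by lia.
    rewrite Rinv_1 in E. lra.
Qed.

Lemma finite_part H mu (A B : Z -> Prop) : upper_quasi_density H mu ->
  subH H A -> subH H B -> forall m : nat,
  mu (fun w => A w \/ (B w /\ (0 < w < Z.of_nat m)%Z)) <= mu A.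
Proof.
  intros Hmu SA SB m.
  pose proof Hmu as [_ [_ [Hu _]]].
  induction m as [|m IH].
  - replace (fun w => A w \/ (B w /\ (0 < w < Z.of_nat 0)%Z)) with A; [lra|].
    apply pext; intros z; simpl; split; [auto|intros [?|[_ ?]]; auto; lia].
  - destruct (classic (B (Z.of_nat m) /\ (0 < Z.of_nat m)%Z)) as [Hc|Hc].
    + replace (fun w => A w \/ (B w /\ (0 < w < Z.of_nat (S m))%Z))
        with (union (fun w => A w \/ (B w /\ (0 < w < Z.of_nat m)%Z)) (fun w => w = Z.of_nat m)).
      * pose proof (Hu (fun w => A w \/ (B w /\ (0 < w < Z.of_nat m)%Z)) (fun w => w = Z.of_nat m)) as U.
        rewrite (sing0 H mu Hmu (Z.of_nat m)) in U by (apply SB; apply Hc).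
        assert (U' := U (fun z Hz => match Hz with or_introl a => SA z a | or_intror (conj b _) => SB z b end)
                       (fun z Hz => eq_ind_r _ (SB _ (proj1 Hc)) Hz)).
        lra.
      * apply pext; intros z; unfold union; split.
        -- intros [[?|[? ?]]| ->]; [left; auto | right; split; [auto|lia] | right; split; [apply Hc|pose proof (proj2 Hc); lia]].
        -- intros [?|[? ?]]; auto.
           destruct (Z.eq_dec z (Z.of_nat m)); [right; auto|left; right; split; [auto|lia]].
    + replace (fun w => A w \/ (B w /\ (0 < w < Z.of_nat (S m))%Z))
        with (fun w => A w \/ (B w /\ (0 < w < Z.of_nat m)%Z)); [exact IH|].
      apply pext; intros z; split.
      * intros [?|[? ?]]; auto; right; split; [auto|lia].
      * intros [?|[? ?]]; auto.
        destruct (Z.eq_dec z (Z.of_nat m)) as [->|]; [exfalso; apply Hc; split; [auto|lia]|].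
        right; split; [auto|lia].
Qed.

Lemma discrete (f : nat -> R) xi : forall k, f 0%nat < xi -> xi <= f k ->
  exists j, (j < k)%nat /\ f j < xi /\ xi <= f (S j).
Proof.
  induction k as [|k IH]; intros H0 Hk; [lra|].
  destruct (Rlt_or_le (f k) xi) as [Hl|Hl].
  - exists k; repeat split; auto.
  - destruct (IH H0 Hl) as [j [? ?]]; exists j; split; [lia|auto].
Qed.

Lemma step H mu xi (A B : Z -> Prop) (k : Z) : upper_quasi_density H mu ->
  (0 < k)%Z -> subH H B -> incl A B -> mu A < xi -> xi <= mu B ->
  exists A2 B2, incl A A2 /\ incl A2 B2 /\ incl B2 B /\ mu A2 < xi /\ xi <= mu B2 /\
    exists h, (0 <= h)%Z /\ incl (setminus B2 A2) (dil k h (inH H)).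
Proof.
  intros Hmu Hk SB AB HA HB.
  set (A' := fun w => A w \/ (B w /\ (0 < w < k)%Z)).
  assert (HA' : mu A' <= mu A).
  { pose proof (finite_part H mu A B Hmu (fun z Hz => SB z (AB z Hz)) SB (Z.to_nat k)) as F.
    rewrite Z2Nat.id in F by lia. exact F. }
  set (Zj := fun (j : nat) w => A' w \/ (B w /\ ~ (0 < w < k)%Z /\ (w mod k < Z.of_nat j)%Z)).
  assert (Z0 : Zj 0%nat = A').
  { apply pext; intros z; unfold Zj; split; [|auto].
    intros [?|[_ [_ ?]]]; auto. pose proof (Z.mod_pos_bound z k Hk); simpl in *; lia. }
  assert (ZK : Zj (Z.to_nat k) = B).
  { apply pext; intros z; unfold Zj, A'; split.
    - intros [[?|[? _]]|[? _]]; auto.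
    - intros Bz. destruct (classic (0 < z < k)%Z); [left; right; auto|].
      right; repeat split; auto. pose proof (Z.mod_pos_bound z k Hk); lia. }
  destruct (discrete (fun j => mu (Zj j)) xi (Z.to_nat k)) as [j [Hj [H1 H2]]].
  { simpl; rewrite Z0; lra. }
  { simpl; rewrite ZK; lra. }
  exists (Zj j), (Zj (S j)); repeat split; auto.
  - intros z Az; left; left; auto.
  - intros z [?|[? [? ?]]]; [left; auto|right; repeat split; auto; lia].
  - intros z [[?|[? _]]|[? _]]; auto.
  - exists (Z.of_nat j); split; [lia|].
    intros z [Hz1 Hz2]. unfold Zj in Hz1, Hz2.
    destruct Hz1 as [?|[Bz [Ns Hm]]]; [exfalso; apply Hz2; left; auto|].
    assert (Em : (z mod k = Z.of_nat j)%Z).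
    { destruct (Z.eq_dec (z mod k) (Z.of_nat j)); auto.
      exfalso; apply Hz2; right; repeat split; auto; lia. }
    exists (z / k)%Z; split.
    + pose proof (SB z Bz) as Iz. destruct H; simpl in *; auto.
      * apply Z.div_pos; lia.
      * apply Z.div_str_pos; lia.
    + rewrite <- Em. apply Z.div_mod; lia.
Qed.

Theorem mainTheorem9 (H : Hkind) (mu : (Z -> Prop) -> R)
  (Hmu : upper_quasi_density H mu)
  (X Y : Z -> Prop) (HXY : incl X Y) (HY : subH H Y)
  (Hlt : mu X < mu Y) (xi : R) (Hxi1 : mu X < xi) (Hxi2 : xi < mu Y) :
  exists A B : nat -> (Z -> Prop),
    (* (i) *)
    incl X (A 1%nat) /\
    (forall n, (1 <= n)%nat -> incl (A n) (A (S n))) /\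
    (forall n, (1 <= n)%nat -> incl (A n) (B n)) /\
    (forall n, (1 <= n)%nat -> incl (B (S n)) (B n)) /\
    incl (B 1%nat) Y /\
    (* (ii) *)
    (forall n, (1 <= n)%nat -> mu (A n) < xi <= mu (B n)) /\
    (* (iii) *)
    (forall n, (1 <= n)%nat ->
       exists h k : Z, (0 <= h)%Z /\ (0 <= k)%Z /\ (Z.of_nat n <= k)%Z /\
         incl (setminus (B n) (A n)) (dil k h (inH H))).
Proof.
  set (Inv := fun p : (Z -> Prop) * (Z -> Prop) =>
    incl (fst p) (snd p) /\ incl (snd p) Y /\ mu (fst p) < xi /\ xi <= mu (snd p)).
  assert (STEP : forall (k : nat) p, Inv p -> {q | Inv q /\ incl (fst p) (fst q) /\
     incl (snd q) (snd p) /\ exists h, (0 <= h)%Z /\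
     incl (setminus (snd q) (fst q)) (dil (Z.of_nat (S k)) h (inH H))}).
  { intros k p [I1 [I2 [I3 I4]]]. apply constructive_indefinite_description.
    destruct (step H mu xi (fst p) (snd p) (Z.of_nat (S k)) Hmu ltac:(lia)
      (fun z Hz => HY z (I2 z Hz)) I1 I3 I4) as [A2 [B2 [J1 [J2 [J3 [J4 [J5 J6]]]]]]].
    exists (A2, B2); simpl. repeat split; auto.
    intros z Hz; apply I2, J3, Hz. }
  set (T := {p | Inv p}).
  assert (I0 : Inv (X, Y)).
  { unfold Inv; simpl; repeat split; auto; try lra. intros z Hz; auto. }
  set (s0 := exist Inv (X, Y) I0 : T).
  set (st := fun (i : nat) (s : T) =>
    exist Inv (proj1_sig (STEP i (proj1_sig s) (proj2_sig s)))
      (proj1 (proj2_sig (STEP i (proj1_sig s) (proj2_sig s)))) : T).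
  set (sq := fun i => nat_rect (fun _ => T) s0 st i).
  exists (fun n => fst (proj1_sig (sq n))), (fun n => snd (proj1_sig (sq n))).
  assert (PS : forall n, incl (fst (proj1_sig (sq n))) (fst (proj1_sig (sq (S n)))) /\
     incl (snd (proj1_sig (sq (S n)))) (snd (proj1_sig (sq n))) /\ exists h, (0 <= h)%Z /\
     incl (setminus (snd (proj1_sig (sq (S n)))) (fst (proj1_sig (sq (S n)))))
       (dil (Z.of_nat (S n)) h (inH H))).
  { intros n. change (sq (S n)) with (st n (sq n)). unfold st; simpl.
    destruct (STEP n (proj1_sig (sq n)) (proj2_sig (sq n))) as [q Hq]; simpl; apply Hq. }
  assert (PI : forall n, Inv (proj1_sig (sq n))) by (intros n; apply proj2_sig).
  split; [|split; [|split; [|split; [|split; [|split]]]]].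
  - destruct (PS 0%nat) as [P _]. exact P.
  - intros n _; apply PS.
  - intros n _; apply PI.
  - intros n _; apply PS.
  - intros z Hz; apply (PI 1%nat), Hz.
  - intros n _; split; apply PI.
  - intros n Hn. destruct n as [|m]; [lia|].
    destruct (PS m) as [_ [_ [h [Hh Hi]]]].
    exists h, (Z.of_nat (S m)); repeat split; auto; lia.
Qed.
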